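(* Let $\mathcal M\in\{\mathcal M_1,\mathcal M_2,\mathcal M_3,\mathcal M_4\}$ and $n\ge 2$. Then $m_{\mathrm{opt}}(n;\mathcal M)>1$, i.e. there is some $m\in\{2,\dots,n\}$ with $F(m;n)<F(1;n)$.
   Context: Let $n\ge 1$, let $\mathbf X=\{X_1,\dots,X_n\}$ with the uniform probability measure. For $1\le m\le n$ let $\mathcal X_m$ be the set of finite sequences $\chi=(\chi_1,\dots,\chi_\ell)$ of elements of $\mathbf X$ such that $\{\chi_1,\dots,\chi_\ell\}$ has exactly $m$ elements and $\chi_\ell\ne\chi_i$ for all $i<\ell$; write $\ell=\ell(\chi)$, give $\chi$ weight $n^{-\ell(\chi)}$ (this is a probability measure on $\mathcal X_m$), and for $f:\mathcal X_m\to\mathbb R$ write $E_m[f]=\sum_{\chi\in\mathcal X_m}f(\chi)n^{-\ell(\chi)}$. For $\chi\in\mathcal X_m$ and $0\le j\le m$ let $t_j(\chi)$ be the least $t\ge0$ with $|\{\chi_1,\dots,\chi_t\}|=j$ (so $t_0=0$), and for $1\le j\le m-1$ let $\tau_j(\chi)=t_{j+1}(\chi)-t_j(\chi)-1$. Put $b(j)=(1+\frac1j)\log_2(j+1)-1$ ($j\ge1$), $b_f(j)=\log_2(j+1)$ ($j\ge0$), $s(j)=\frac{j+1}2$. The four models specify functions $s_{\mathcal L}(k)$ (cost of a search for an object on the sorted list when the list has $k$ objects), $s_{\mathcal P}(j)$ (cost of a search for an object in the pile when the pile has $j$ objects) and the cleanup cost $C_m$: $\mathcal M_1$: $s_{\mathcal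 L}(k)=b(k)$, $s_{\mathcal P}(j)=b_f(n-j)+s(j)$, $C_m=\sum_{j=1}^m b_f(n-j)$; $\mathcal M_2$: $s_{\mathcal L}(k)=b(n)$, $s_{\mathcal P}(j)=b_f(n)+s(j)$, $C_m=m\,b(n)$; $\mathcal M_3$: $s_{\mathcal L}(k)=b(k)$, $s_{\mathcal P}(j)=s(j)$, $C_m=\sum_{j=1}^m b_f(n-j)$; $\mathcal M_4$: $s_{\mathcal L}(k)=b(n)$, $s_{\mathcal P}(j)=s(j)$, $C_m=m\,b(n)$. The average total cost is $F(m;n)=E_m[1/\ell]\Big(\sum_{j=0}^{m-1}s_{\mathcal L}(n-j)+C_m\Big)+\sum_{j=1}^{m-1}E_m[\tau_j/\ell]\,s_{\mathcal P}(j)$, and $m_{\mathrm{opt}}(n;\mathcal M)$ is the smallest $m\in\{1,\dots,n\}$ minimizing $F(m;n)$. *)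

(* Defs.v *)
From Stdlib Require Import Reals Lra List Arith.
Import ListNotations.
Open Scope R_scope.

(* The alphabet X = {X_1,...,X_n} is represented by {0,...,n-1}. *)

Fixpoint all_seqs (n L : nat) : list (list nat) :=
  match L with
  | O => [ [] ]
  | S L' => flat_map (fun s => map (fun x => x :: s) (seq 0 n)) (all_seqs n L')
  end.

Definition ndistinct (l : list nat) : nat := length (nodup Nat.eq_dec l).

Definition last_new (l : list nat) : bool :=
  match rev l with
  | x :: r => negb (existsb (Nat.eqb x) r)
  | [] => false
  end.

Definition inX (m : nat) (l : list nat) : bool :=
  Nat.eqb (ndistinct l) m && last_new l.

Definition t_idx (j : nat) (l : list nat) : nat :=
  match find (fun t => Nat.eqb (ndistinct (firstn t l)) j) (seq 0 (S (length l))) with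
  | Some t => t
  | None => O
  end.

Definition tau (j : nat) (l : list nat) : nat := (t_idx (S j) l - t_idx j l - 1)%nat.

(* E_m[f] = v : the series sum_{chi in X_m} f(chi) n^{-l(chi)}, grouped by the
   length L = l(chi), converges to v. *)
Definition E_is (n m : nat) (f : list nat -> R) (v : R) : Prop :=
  infinite_sum
    (fun L => fold_right Rplus 0
       (map (fun l => f l * / (INR n) ^ L) (filter (inX m) (all_seqs n L))))
    v.

Definition log2 (x : R) : R := ln x / ln 2.
Definition b (j : nat) : R := (1 + / INR j) * log2 (INR j + 1) - 1.
Definition b_f (j : nat) : R := log2 (INR j + 1).
Definition s (j : nat) : R := (INR j + 1) / 2.

Inductive Model := M1 | M2 | M3 | M4.

Definition sumR (l : list nat) (f : nat -> R) : R :=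
  fold_right (fun j acc => f j + acc) 0 l.

Definition sL (M : Model) (n k : nat) : R :=
  match M with
  | M1 | M3 => b k
  | M2 | M4 => b n
  end.

Definition sP (M : Model) (n j : nat) : R :=
  match M with
  | M1 => b_f (n - j) + s j
  | M2 => b_f n + s j
  | M3 | M4 => s j
  end.

Definition Ccost (M : Model) (n m : nat) : R :=
  match M with
  | M1 | M3 => sumR (seq 1 m) (fun j => b_f (n - j))
  | M2 | M4 => INR m * b n
  end.

Definition F_is (M : Model) (n m : nat) (v : R) : Prop :=
  exists (e : R) (t : nat -> R),
    E_is n m (fun l => / INR (length l)) e /\
    (forall j, (1 <= j <= m - 1)%nat ->
       E_is n m (fun l => INR (tau j l) / INR (length l)) (t j)) /\
    v = e * (sumR (seq 0 m) (fun j => sL M n (n - j)) + Ccost M n m)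
        + sumR (seq 1 (m - 1)) (fun j => t j * sP M n j).

(* Main.v *)
Require Import Defs.
From Stdlib Require Import Reals List Arith.
From Stdlib Require Import Lra Lia FinFun.
Import ListNotations.
Open Scope R_scope.

Lemma all_seqs_spec n L l : In l (all_seqs n L) <-> (length l = L /\ forall x, In x l -> (x < n)%nat).
Proof.
  revert l; induction L as [|L IH]; intro l; simpl.
  - split.
    + intros [<-|[]]; split; [reflexivity| intros x []].
    + intros [H _]; left; destruct l; [reflexivity|discriminate].
  - rewrite in_flat_map. split.
    + intros [s [Hs Hl]]. apply in_map_iff in Hl. destruct Hl as [x [<- Hx]].
      apply IH in Hs. destruct Hs as [Hs1 Hs2]. apply in_seq in Hx.
      split; [simpl; congruence|]. intros y [<-|Hy]; [lia| auto].
    + intros [Hlen Hb]. destruct l as [|x s]; [discriminate|].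
      exists s. split.
      * apply IH. split; [simpl in Hlen; lia|]. intros y Hy; apply Hb; right; auto.
      * apply in_map_iff. exists x. split; [reflexivity|]. apply in_seq.
        specialize (Hb x (or_introl eq_refl)). lia.
Qed.

Lemma all_seqs_nodup n L : NoDup (all_seqs n L).
Proof.
  induction L as [|L IH]; simpl.
  - constructor; [intros []|constructor].
  - induction IH as [|s A Hs HA IHA]; simpl; [constructor|].
    apply NoDup_app.
    + apply Injective_map_NoDup; [intros x y H; injection H; auto| apply seq_NoDup].
    + exact IHA.
    + intros a Ha Hb. apply in_map_iff in Ha. destruct Ha as [x [<- _]].
      apply in_flat_map in Hb. destruct Hb as [s' [Hs' Hb]]. apply in_map_iff in Hb.
      destruct Hb as [y [Heq _]]. injection Heq as H1 H2. subst. contradiction.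
Qed.

Lemma nd_ge2 l x y : In x l -> In y l -> x <> y -> (2 <= ndistinct l)%nat.
Proof.
  intros Hx Hy Hxy. unfold ndistinct.
  change 2%nat with (length [x;y]).
  apply NoDup_incl_length.
  - constructor; [intros [H|[]]; congruence | constructor; [intros []|constructor]].
  - intros z [<-|[<-|[]]]; apply nodup_In; auto.
Qed.

Lemma nd_ge3 l x y z : In x l -> In y l -> In z l -> x <> y -> x <> z -> y <> z -> (3 <= ndistinct l)%nat.
Proof.
  intros Hx Hy Hz H1 H2 H3. unfold ndistinct.
  change 3%nat with (length [x;y;z]).
  apply NoDup_incl_length.
  - constructor; [intros [H|[H|[]]]; congruence |].
    constructor; [intros [H|[]]; congruence |].
    constructor; [intros []|constructor].
  - intros w [<-|[<-|[<-|[]]]]; apply nodup_In; auto.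
Qed.

Lemma last_new_app s y : last_new (s ++ [y]) = true -> ~ In y s.
Proof.
  unfold last_new. rewrite rev_app_distr. simpl.
  intros H Hin. apply Bool.negb_true_iff in H.
  assert (existsb (Nat.eqb y) (rev s) = true).
  { apply existsb_exists; exists y; split; [apply -> in_rev; exact Hin | apply Nat.eqb_refl]. }
  congruence.
Qed.

Lemma inX1_len l : inX 1 l = true -> length l = 1%nat.
Proof.
  unfold inX. intros H. apply Bool.andb_true_iff in H. destruct H as [H1 H2].
  apply Nat.eqb_eq in H1.
  destruct l as [|a l']; [discriminate|].
  destruct (exists_last (l:=a::l') ltac:(discriminate)) as [s [y Heq]].
  rewrite Heq in H1, H2 |- *. apply last_new_app in H2.
  destruct s as [|x s]; [reflexivity|].
  exfalso. assert (2 <= ndistinct ((x::s) ++ [y]))%nat.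
  { apply (nd_ge2 _ x y); [left; reflexivity| apply in_or_app; right; left; reflexivity|].
    intro; subst; apply H2; left; reflexivity. }
  lia.
Qed.

Lemma inX2_shape l : inX 2 l = true ->
  exists a c, a <> c /\ l = repeat a (length l - 1) ++ [c] /\ (2 <= length l)%nat.
Proof.
  unfold inX. intros H. apply Bool.andb_true_iff in H. destruct H as [H1 H2].
  apply Nat.eqb_eq in H1.
  destruct l as [|a0 l']; [discriminate|].
  destruct (exists_last (l:=a0::l') ltac:(discriminate)) as [s [c Heq]].
  rewrite Heq in H1, H2 |- *. apply last_new_app in H2. clear Heq.
  destruct s as [|a s].
  { simpl in H1. discriminate. }
  assert (Hall : forall x, In x (a::s) -> x = a).
  { intros x Hx. destruct (Nat.eq_dec x a) as [|Hne]; auto. exfalso.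
    assert (3 <= ndistinct ((a::s) ++ [c]))%nat.
    { apply (nd_ge3 _ x a c).
      - apply in_or_app; left; exact Hx.
      - apply in_or_app; left; left; reflexivity.
      - apply in_or_app; right; left; reflexivity.
      - exact Hne.
      - intro; subst; contradiction.
      - intro; subst; apply H2; left; reflexivity. }
    lia. }
  exists a, c. split; [intro; subst; apply H2; left; reflexivity|].
  rewrite length_app. simpl (length [c]). rewrite Nat.add_sub. split; [|simpl; lia].
  f_equal. apply Forall_eq_repeat. apply Forall_forall. intros x Hx. symmetry. auto.
Qed.

Definition shapes n L := flat_map (fun a => map (fun j => repeat a (L-1) ++ [if (j <? a)%nat then j else S j]) (seq 0 (n-1))) (seq 0 n).

Lemma length_flat_map_const {A B} (f : A -> list B) k l : (forall a, length (f a) = k) -> length (flat_map f l) = (length l * k)%nat.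
Proof. intros H; induction l; simpl; [reflexivity| rewrite length_app, H, IHl; reflexivity]. Qed.

Lemma shapes_len n L : length (shapes n L) = (n * (n-1))%nat.
Proof.
  unfold shapes. rewrite (length_flat_map_const _ (n-1)); [rewrite length_seq; reflexivity|].
  intros a. rewrite length_map, length_seq. reflexivity.
Qed.

Lemma filt2_incl n L : incl (filter (inX 2) (all_seqs n L)) (shapes n L).
Proof.
  intros l Hl. apply filter_In in Hl. destruct Hl as [Hl HX].
  apply all_seqs_spec in Hl. destruct Hl as [Hlen Hb].
  destruct (inX2_shape l HX) as [a [c [Hac [Heq H2]]]].
  assert (Ha : (a < n)%nat).
  { apply Hb. rewrite Heq. apply in_or_app. left.
    destruct (length l - 1)%nat eqn:E; [lia|left; reflexivity]. }
  assert (Hc : (c < n)%nat).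
  { apply Hb. rewrite Heq. apply in_or_app. right. left. reflexivity. }
  unfold shapes. apply in_flat_map. exists a. split; [apply in_seq; lia|].
  apply in_map_iff. exists (if (c <? a)%nat then c else (c - 1))%nat.
  split.
  - rewrite Heq. rewrite Hlen. f_equal. f_equal.
    destruct (Nat.ltb_spec c a).
    + destruct (Nat.ltb_spec c a); [reflexivity|lia].
    + destruct (Nat.ltb_spec (c-1) a); lia.
  - apply in_seq. destruct (Nat.ltb_spec c a); lia.
Qed.

Lemma filt2_count n L : (length (filter (inX 2) (all_seqs n L)) <= n * (n-1))%nat.
Proof.
  rewrite <- (shapes_len n L). apply NoDup_incl_length;
  [apply NoDup_filter, all_seqs_nodup| apply filt2_incl].
Qed.

Lemma filt2_elem n L l : In l (filter (inX 2) (all_seqs n L)) ->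
  length l = L /\ (2 <= L)%nat.
Proof.
  intros H. apply filter_In in H. destruct H as [H1 H2].
  apply all_seqs_spec in H1. destruct H1 as [H1 _].
  destruct (inX2_shape l H2) as [_ [_ [_ [_ H]]]]. lia.
Qed.

Lemma tau1_bound l : (1 <= length l)%nat -> (tau 1 l <= length l - 2)%nat.
Proof.
  intros Hl. unfold tau.
  assert (H1 : (1 <= t_idx 1 l)%nat).
  { unfold t_idx. destruct (find _ _) as [t|] eqn:E.
    - apply find_some in E. destruct E as [_ E]. destruct t; [|lia]. simpl in E. discriminate.
    - exfalso. assert (E2 := find_none _ _ E 1%nat).
      assert (Hin : In 1%nat (seq 0 (S (length l)))) by (apply in_seq; lia).
      specialize (E2 Hin). destruct l as [|x l']; [simpl in Hl; lia|]. simpl in E2. discriminate. }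
  assert (H2 : (t_idx 2 l <= length l)%nat).
  { unfold t_idx. destruct (find _ _) as [t|] eqn:E; [|lia].
    apply find_some in E. destruct E as [E _]. apply in_seq in E. lia. }
  lia.
Qed.

Lemma fold_const {A} (f : A -> R) c l : (forall x, In x l -> f x = c) ->
  fold_right Rplus 0 (map f l) = INR (length l) * c.
Proof.
  induction l as [|a l IH]; intros H; cbn [map fold_right length]; [simpl; ring|].
  rewrite H by (left; reflexivity). rewrite IH by (intros; apply H; right; auto).
  rewrite S_INR. ring.
Qed.

Lemma fold_le {A} (f : A -> R) c l : (forall x, In x l -> f x <= c) ->
  fold_right Rplus 0 (map f l) <= INR (length l) * c.
Proof.
  induction l as [|a l IH]; intros H; cbn [map fold_right length]; [simpl; lra|].
  assert (H1 := H a (or_introl eq_refl)).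
  assert (H2 : fold_right Rplus 0 (map f l) <= INR (length l) * c) by (apply IH; intros; apply H; right; auto).
  rewrite S_INR. lra.
Qed.

Lemma fold_nonneg {A} (f : A -> R) l : (forall x, In x l -> 0 <= f x) ->
  0 <= fold_right Rplus 0 (map f l).
Proof.
  induction l as [|a l IH]; intros H; cbn [map fold_right length]; [simpl; lra|].
  assert (H1 := H a (or_introl eq_refl)).
  assert (H2 : 0 <= fold_right Rplus 0 (map f l)) by (apply IH; intros; apply H; right; auto).
  lra.
Qed.

Lemma fold_lin {A} (f g : A -> R) a c l :
  a * fold_right Rplus 0 (map f l) + c * fold_right Rplus 0 (map g l) =
  fold_right Rplus 0 (map (fun x => a * f x + c * g x) l).
Proof. induction l as [|x l IH]; simpl; [ring|]. rewrite <- IH. ring. Qed.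

Definition ser n m (f : list nat -> R) L :=
  fold_right Rplus 0 (map (fun l => f l * / (INR n) ^ L) (filter (inX m) (all_seqs n L))).

Definition bb n L := if (L <? 2)%nat then 0 else INR (n * (n - 1)) * / INR n ^ L.

Lemma filt2_empty n L : (L < 2)%nat -> filter (inX 2) (all_seqs n L) = [].
Proof.
  intros HL. destruct (filter (inX 2) (all_seqs n L)) as [|l r] eqn:E; [reflexivity|].
  exfalso. assert (Hin : In l (filter (inX 2) (all_seqs n L))) by (rewrite E; left; reflexivity).
  apply filt2_elem in Hin. lia.
Qed.

Lemma ser2_bound n f beta L : (2 <= n)%nat -> 0 <= beta ->
  (forall l, In l (filter (inX 2) (all_seqs n L)) -> f l <= beta) ->
  ser n 2 f L <= beta * bb n L.
Proof.
  intros Hn Hb H. unfold ser, bb.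
  assert (Hw : 0 < / INR n ^ L).
  { apply Rinv_0_lt_compat, pow_lt. apply lt_0_INR. lia. }
  destruct (Nat.ltb_spec L 2) as [HL|HL].
  - rewrite filt2_empty by exact HL. simpl. lra.
  - eapply Rle_trans.
    + apply fold_le with (c := beta * / INR n ^ L). intros l Hl.
      apply Rmult_le_compat_r; [lra|]. apply H, Hl.
    + assert (Hc := filt2_count n L). apply le_INR in Hc.
      assert (0 <= beta * / INR n ^ L) by (apply Rmult_le_pos; lra).
      assert (INR (length (filter (inX 2) (all_seqs n L))) * (beta * / INR n ^ L) <=
              INR (n * (n - 1)) * (beta * / INR n ^ L)) by (apply Rmult_le_compat_r; lra).
      lra.
Qed.

Lemma ser_nonneg n m f L : (forall l, 0 <= f l) -> 0 <= ser n m f L.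
Proof.
  intros H. unfold ser. apply fold_nonneg. intros l _.
  apply Rmult_le_pos; [apply H|]. destruct n as [|n'].
  - simpl. destruct L; simpl; [lra|]. rewrite Rmult_0_l, Rinv_0. lra.
  - apply Rlt_le, Rinv_0_lt_compat, pow_lt. apply lt_0_INR. lia.
Qed.

Lemma bb_sum n : (2 <= n)%nat -> forall K, sum_f_R0 (bb n) (S K) = 1 - (/ INR n) ^ K.
Proof.
  intros Hn. assert (HN : INR n <> 0) by (apply not_0_INR; lia).
  induction K as [|K IH].
  - simpl. unfold bb. simpl. ring.
  - change (sum_f_R0 (bb n) (S (S K))) with (sum_f_R0 (bb n) (S K) + bb n (S (S K))).
    rewrite IH. unfold bb. destruct (Nat.ltb_spec (S (S K)) 2); [lia|].
    rewrite mult_INR, minus_INR by lia. rewrite <- pow_inv.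
    simpl pow. set (z := (/ INR n) ^ K). simpl INR. field. exact HN.
Qed.

Lemma bb_sum_le n : (2 <= n)%nat -> forall K, sum_f_R0 (bb n) K <= 1.
Proof.
  intros Hn K. destruct K as [|K].
  - simpl. unfold bb. simpl. lra.
  - rewrite bb_sum by exact Hn. assert (0 <= (/ INR n) ^ K).
    { apply pow_le. apply Rlt_le, Rinv_0_lt_compat, lt_0_INR. lia. } lra.
Qed.

Lemma bb_cv n : (2 <= n)%nat -> Un_cv (sum_f_R0 (bb n)) 1.
Proof.
  intros Hn eps Heps.
  assert (Hr : Rabs (/ INR n) < 1).
  { assert (2 <= INR n) by (replace 2 with (INR 2) by reflexivity; apply le_INR; exact Hn).
    rewrite Rabs_right by (apply Rle_ge, Rlt_le, Rinv_0_lt_compat; lra).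
    rewrite <- Rinv_1. apply Rinv_lt_contravar; lra. }
  destruct (pow_lt_1_zero _ Hr eps Heps) as [N0 HN0].
  exists (S N0). intros k Hk. destruct k as [|k]; [lia|].
  rewrite bb_sum by exact Hn. unfold Rdist.
  replace (1 - (/ INR n) ^ k - 1) with (- ((/ INR n) ^ k)) by ring.
  rewrite Rabs_Ropp. apply HN0. lia.
Qed.

Lemma cv_const c : Un_cv (fun _ => c) c.
Proof. intros eps He. exists 0%nat. intros. unfold Rdist. rewrite Rminus_diag, Rabs_R0. lra. Qed.

Lemma cv_le u l M : Un_cv u l -> (forall K, (3 <= K)%nat -> u K <= M) -> l <= M.
Proof.
  intros H H2. destruct (Rle_lt_dec l M) as [|Hlt]; [assumption|]. exfalso.
  destruct (H (l - M)) as [N0 HN]; [lra|].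
  specialize (HN (max N0 3) (Nat.le_max_l _ _)). specialize (H2 (max N0 3) (Nat.le_max_r _ _)).
  unfold Rdist in HN. apply Rabs_def2 in HN. lra.
Qed.

Lemma INR_ge2 n : (2 <= n)%nat -> 2 <= INR n.
Proof. intros. replace 2 with (INR 2) by reflexivity. apply le_INR. exact H. Qed.

Lemma ln2_pos : 0 < ln 2.
Proof. assert (H := ln_lt_2). lra. Qed.

Lemma ln_le_x1 y : 0 < y -> ln y <= y - 1.
Proof. intros H. assert (E := exp_ineq1_le (ln y)). rewrite exp_ln in E by exact H. lra. Qed.

Lemma ln_lt_pow x a k m : 0 < x -> 0 < a -> a ^ k < x ^ m -> INR k * ln a < INR m * ln x.
Proof.
  intros Hx Ha H. rewrite <- !ln_pow by assumption. apply ln_increasing; [apply pow_lt; exact Ha|exact H].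
Qed.

Lemma key1 n : (2 <= n)%nat -> 2 * INR n * ln 2 < (INR n + 1) * ln (INR n + 1).
Proof.
  intros Hn. assert (HN := INR_ge2 n Hn).
  assert (H : 2 ^ (2 * n) < (INR n + 1) ^ (n + 1)).
  { destruct (Nat.eq_dec n 2) as [->|Hne].
    - simpl. lra.
    - rewrite pow_mult. simpl (2 ^ 2). replace (2 * (2 * 1)) with 4 by ring.
      assert (3 <= INR n) by (replace 3 with (INR 3) by (simpl; ring); apply le_INR; lia).
      apply Rle_lt_trans with ((INR n + 1) ^ n).
      + apply pow_incr. lra.
      + apply Rlt_pow; [lra|lia]. }
  apply ln_lt_pow in H; [|lra|lra].
  rewrite mult_INR, plus_INR in H. simpl INR in H. lra.
Qed.

Lemma key2 n : (2 <= n)%nat -> 3 * INR n * ln 2 < (INR n + 2) * ln (INR n + 1).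
Proof.
  intros Hn. assert (HN := INR_ge2 n Hn).
  assert (H : 2 ^ (3 * n) < (INR n + 1) ^ (n + 2)).
  { destruct (le_lt_dec 7 n) as [H7|H7].
    - rewrite pow_mult. simpl (2 ^ 3). replace (2 * (2 * (2 * 1))) with 8 by ring.
      assert (7 <= INR n) by (replace 7 with (INR 7) by (simpl; ring); apply le_INR; lia).
      apply Rle_lt_trans with ((INR n + 1) ^ n).
      + apply pow_incr. lra.
      + apply Rlt_pow; [lra|lia].
    - assert (E : (n = 2 \/ n = 3 \/ n = 4 \/ n = 5 \/ n = 6)%nat) by lia.
      destruct E as [-> | [-> | [-> | [-> | -> ]]]]; rewrite INR_IZR_INZ; simpl; lra. }
  apply ln_lt_pow in H; [|lra|lra].
  rewrite mult_INR, plus_INR in H. simpl INR in H. lra.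
Qed.

Lemma Hb1 n : (2 <= n)%nat -> 1 < b n.
Proof.
  intros Hn. assert (HN := INR_ge2 n Hn). assert (Hv := ln2_pos). assert (K := key1 n Hn).
  unfold b, log2.
  assert (E : (1 + / INR n) * (ln (INR n + 1) / ln 2) - 1 - 1 =
              ((INR n + 1) * ln (INR n + 1) - 2 * INR n * ln 2) / (INR n * ln 2)) by (field; lra).
  assert (0 < ((INR n + 1) * ln (INR n + 1) - 2 * INR n * ln 2) / (INR n * ln 2)).
  { apply Rdiv_lt_0_compat; [lra|]. apply Rmult_lt_0_compat; lra. }
  lra.
Qed.

Lemma Hb2 n : (2 <= n)%nat -> b_f n + 1 < 2 * b n.
Proof.
  intros Hn. assert (HN := INR_ge2 n Hn). assert (Hv := ln2_pos). assert (K := key2 n Hn).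
  unfold b, b_f, log2.
  assert (E : 2 * ((1 + / INR n) * (ln (INR n + 1) / ln 2) - 1) - (ln (INR n + 1) / ln 2 + 1) =
              ((INR n + 2) * ln (INR n + 1) - 3 * INR n * ln 2) / (INR n * ln 2)) by (field; lra).
  assert (0 < ((INR n + 2) * ln (INR n + 1) - 3 * INR n * ln 2) / (INR n * ln 2)).
  { apply Rdiv_lt_0_compat; [lra|]. apply Rmult_lt_0_compat; lra. }
  lra.
Qed.

Lemma key3 N : 2 <= N -> ln N / (N - 1) + ln (N - 1) <= ln (N + 1) + ln (N + 1) / N.
Proof.
  intros HN.
  set (a := ln N). set (c := ln (N + 1)). set (d := ln (N - 1)).
  assert (Ha0 : 0 <= a).
  { unfold a. rewrite <- ln_1. destruct (Req_dec N 1); [lra|]. left; apply ln_increasing; lra. }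
  assert (Hac : a <= c) by (unfold a, c; left; apply ln_increasing; lra).
  assert (HaN : a <= N - 1) by (apply ln_le_x1; lra).
  assert (Hd : d - c <= - (2 / (N + 1))).
  { assert (E : d - c = ln ((N - 1) / (N + 1))).
    { unfold Rdiv. rewrite ln_mult by (try apply Rinv_0_lt_compat; lra).
      rewrite ln_Rinv by lra. unfold d, c. ring. }
    rewrite E. eapply Rle_trans; [apply ln_le_x1; apply Rdiv_lt_0_compat; lra|].
    right. field. lra. }
  assert (E1 : a / (N - 1) = a / N + a / (N * (N - 1))) by (field; lra).
  assert (H1 : a / N <= c / N) by (apply Rmult_le_compat_r; [left; apply Rinv_0_lt_compat; lra|exact Hac]).
  assert (H2 : a / (N * (N - 1)) <= / N).
  { replace (/ N) with ((N - 1) / (N * (N - 1))) by (field; lra).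
    apply Rmult_le_compat_r; [left; apply Rinv_0_lt_compat; apply Rmult_lt_0_compat; lra|exact HaN]. }
  assert (H3 : / N <= 2 / (N + 1)).
  { assert (E : 2 / (N + 1) - / N = (N - 1) / (N * (N + 1))) by (field; lra).
    assert (0 <= (N - 1) / (N * (N + 1))).
    { apply Rmult_le_pos; [lra|left; apply Rinv_0_lt_compat; apply Rmult_lt_0_compat; lra]. }
    lra. }
  lra.
Qed.

Lemma Hb3 n : (2 <= n)%nat -> b (n - 1) + b_f (n - 2) <= b n + b_f (n - 1).
Proof.
  intros Hn. assert (HN := INR_ge2 n Hn). assert (Hv := ln2_pos).
  unfold b, b_f, log2. rewrite !minus_INR by lia. simpl INR.
  replace (INR n - (1 + 1) + 1) with (INR n - 1) by ring.
  replace (INR n - 1 + 1) with (INR n) by ring.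
  assert (K := key3 (INR n) HN).
  set (N := INR n) in *. set (a := ln N) in *. set (c := ln (N + 1)) in *. set (d := ln (N - 1)) in *.
  assert (E : (1 + / N) * (c / ln 2) - 1 + a / ln 2 - ((1 + / (N - 1)) * (a / ln 2) - 1 + d / ln 2)
              = (c + c / N - (a / (N - 1) + d)) / ln 2) by (field; lra).
  assert (0 <= (c + c / N - (a / (N - 1) + d)) / ln 2).
  { apply Rmult_le_pos; [lra|left; apply Rinv_0_lt_compat; lra]. }
  lra.
Qed.

Lemma b_f_nonneg k : 0 <= b_f k.
Proof.
  unfold b_f, log2. assert (Hv := ln2_pos). apply Rmult_le_pos; [|left; apply Rinv_0_lt_compat; lra].
  assert (0 <= INR k) by apply pos_INR. rewrite <- ln_1.
  destruct (Req_dec (INR k) 0) as [E|E]; [rewrite E, Rplus_0_l; lra|].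
  left; apply ln_increasing; lra.
Qed.

Definition AA1 M n := sumR (seq 0 1) (fun j => sL M n (n - j)) + Ccost M n 1.
Definition AA2 M n := sumR (seq 0 2) (fun j => sL M n (n - j)) + Ccost M n 2.

Lemma model_facts M n : (2 <= n)%nat ->
  0 <= sP M n 1 /\ sP M n 1 < AA1 M n /\ AA2 M n <= 2 * AA1 M n.
Proof.
  intros Hn. assert (H1 := Hb1 n Hn). assert (H2 := Hb2 n Hn). assert (H3 := Hb3 n Hn).
  assert (H4 := b_f_nonneg (n - 1)). assert (H5 := b_f_nonneg (n - 2)). assert (H6 := b_f_nonneg n).
  unfold AA1, AA2. destruct M; cbn [sumR fold_right seq sL sP Ccost]; rewrite ?Nat.sub_0_r;
  unfold s; simpl INR; lra.
Qed.

Lemma filter_all {A} (p : A -> bool) l : (forall x, In x l -> p x = true) -> filter p l = l.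
Proof. induction l as [|a l IH]; simpl; intros H; [reflexivity|]. rewrite H by (left; reflexivity). f_equal. apply IH; intros; apply H; right; auto. Qed.

Lemma filter_nil_all {A} (p : A -> bool) l : (forall x, In x l -> p x = false) -> filter p l = [].
Proof. induction l as [|a l IH]; simpl; intros H; [reflexivity|]. rewrite H by (left; reflexivity). apply IH; intros; apply H; right; auto. Qed.

Lemma E1_val n L : (2 <= n)%nat -> ser n 1 (fun l => / INR (length l)) L = if (L =? 1)%nat then 1 else 0.
Proof.
  intros Hn. unfold ser. destruct (Nat.eqb_spec L 1) as [->|HL].
  - rewrite filter_all.
    + rewrite fold_const with (c := / INR n).
      * simpl all_seqs. rewrite app_nil_r, length_map, length_seq. field. apply not_0_INR. lia.
      * intros l Hl. apply all_seqs_spec in Hl. destruct Hl as [Hl _]. rewrite Hl. simpl. field. apply not_0_INR. lia.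
    + intros l Hl. apply all_seqs_spec in Hl. destruct Hl as [Hl _].
      destruct l as [|x [|y l]]; try discriminate. reflexivity.
  - rewrite filter_nil_all; [reflexivity|].
    intros l Hl. apply all_seqs_spec in Hl. destruct Hl as [Hl _].
    destruct (inX 1 l) eqn:E; [|reflexivity]. apply inX1_len in E. lia.
Qed.

Lemma E1_sum n : (2 <= n)%nat -> infinite_sum (ser n 1 (fun l => / INR (length l))) 1.
Proof.
  intros Hn.
  assert (S1 : forall K, sum_f_R0 (ser n 1 (fun l => / INR (length l))) (S K) = 1).
  { induction K as [|K IH].
    - simpl. rewrite !E1_val by exact Hn. simpl. ring.
    - change (sum_f_R0 (ser n 1 (fun l => / INR (length l))) (S (S K))) with
        (sum_f_R0 (ser n 1 (fun l => / INR (length l))) (S K) + ser n 1 (fun l => / INR (length l)) (S (S K))).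
      rewrite IH, E1_val by exact Hn. simpl. ring. }
  intros eps He. exists 1%nat. intros k Hk. destruct k as [|k]; [lia|].
  rewrite S1. unfold Rdist. rewrite Rminus_diag, Rabs_R0. lra.
Qed.

Lemma elem_bound A1 A2 P x t : 2 <= x -> 0 <= t <= x - 2 -> 0 <= P -> P < A1 -> A2 <= 2 * A1 ->
  A2 * / x + P * (t / x) <= (2 * A1 + (x - 2) * P) / x /\ (2 * A1 + (x - 2) * P) / x <= A1.
Proof.
  intros Hx Ht HP HPA HA. split.
  - assert (E : (2 * A1 + (x - 2) * P) / x - (A2 * / x + P * (t / x)) = (2 * A1 - A2 + P * (x - 2 - t)) / x) by (field; lra).
    assert (0 <= (2 * A1 - A2 + P * (x - 2 - t)) / x).
    { apply Rmult_le_pos; [|left; apply Rinv_0_lt_compat; lra].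
      assert (0 <= P * (x - 2 - t)) by (apply Rmult_le_pos; lra). lra. }
    lra.
  - assert (E : A1 - (2 * A1 + (x - 2) * P) / x = ((x - 2) * (A1 - P)) / x) by (field; lra).
    assert (0 <= ((x - 2) * (A1 - P)) / x).
    { apply Rmult_le_pos; [apply Rmult_le_pos; lra|left; apply Rinv_0_lt_compat; lra]. }
    lra.
Qed.

Lemma tau_real l : (2 <= length l)%nat -> 0 <= INR (tau 1 l) <= INR (length l) - 2.
Proof.
  intros H. split; [apply pos_INR|].
  assert (H1 := tau1_bound l ltac:(lia)). apply le_INR in H1. rewrite minus_INR in H1 by lia.
  simpl INR in H1. lra.
Qed.

Lemma inv_INR_nonneg k : 0 <= / INR k.
Proof.
  destruct (Nat.eq_dec k 0) as [->|Hk]; [simpl; rewrite Rinv_0; lra|].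
  apply Rlt_le, Rinv_0_lt_compat, lt_0_INR. lia.
Qed.

Theorem proposition1 (M : Model) (n : nat) (hn : (2 <= n)%nat) :
  exists m : nat, (2 <= m <= n)%nat /\
    exists F1 Fm : R, F_is M n 1 F1 /\ F_is M n m Fm /\ Fm < F1.
Proof.
  destruct (model_facts M n hn) as [HP0 [HPA HA2]].
  set (P := sP M n 1) in *. set (a1 := AA1 M n) in *. set (a2 := AA2 M n) in *.
  assert (HN := INR_ge2 n hn).
  set (E := ser n 2 (fun l => / INR (length l))).
  set (T := ser n 2 (fun l => INR (tau 1 l) / INR (length l))).
  assert (HE : forall L, 0 <= E L <= bb n L).
  { intros L. split; [apply ser_nonneg; intros; apply inv_INR_nonneg|].
    replace (bb n L) with (1 * bb n L) by ring. apply ser2_bound; [exact hn|lra|].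
    intros l Hl. apply filt2_elem in Hl. destruct Hl as [Hl HL].
    rewrite Hl. assert (2 <= INR L) by (apply INR_ge2; exact HL).
    rewrite <- Rinv_1. apply Rinv_le_contravar; lra. }
  assert (HT : forall L, 0 <= T L <= bb n L).
  { intros L. split.
    - apply ser_nonneg; intros. apply Rmult_le_pos; [apply pos_INR|apply inv_INR_nonneg].
    - replace (bb n L) with (1 * bb n L) by ring. apply ser2_bound; [exact hn|lra|].
      intros l Hl. apply filt2_elem in Hl. destruct Hl as [Hl HL].
      assert (Ht := tau_real l ltac:(lia)). rewrite Hl in Ht |- *.
      assert (2 <= INR L) by (apply INR_ge2; exact HL).
      replace 1 with (INR L * / INR L) by (field; lra).
      apply Rmult_le_compat_r; [left; apply Rinv_0_lt_compat; lra|lra]. }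
  destruct (Rseries_CV_comp E (bb n) HE (exist _ 1 (bb_cv n hn))) as [e2 He2].
  destruct (Rseries_CV_comp T (bb n) HT (exist _ 1 (bb_cv n hn))) as [t1 Ht1].
  set (w3 := / INR n ^ 3).
  assert (Hw3 : 0 < w3) by (apply Rinv_0_lt_compat, pow_lt; lra).
  set (delta := (a1 - P) / 3 * w3).
  assert (Hdelta : 0 < delta) by (unfold delta; apply Rmult_lt_0_compat; lra).
  set (g := fun l => a2 * / INR (length l) + P * (INR (tau 1 l) / INR (length l))).
  assert (Hd : forall L, a2 * E L + P * T L = ser n 2 g L).
  { intros L. unfold E, T, ser. rewrite fold_lin. f_equal. apply map_ext. intros l. unfold g. ring. }
  assert (Hg : forall L l, In l (filter (inX 2) (all_seqs n L)) ->
             g l <= (2 * a1 + (INR L - 2) * P) / INR L /\ (2 * a1 + (INR L - 2) * P) / INR L <= a1).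
  { intros L l Hl. apply filt2_elem in Hl. destruct Hl as [Hl HL].
    assert (Ht := tau_real l ltac:(lia)). rewrite Hl in Ht. unfold g. rewrite Hl.
    apply elem_bound; try lra. }
  assert (Hbound : forall L, a2 * E L + P * T L <= a1 * bb n L - (if (L =? 3)%nat then delta else 0)).
  { intros L. rewrite Hd. destruct (Nat.eqb_spec L 3) as [->|HL3].
    - unfold ser. eapply Rle_trans.
      + apply fold_le with (c := (2 * a1 + (INR 3 - 2) * P) / INR 3 * w3).
        intros l Hl. apply Rmult_le_compat_r; [lra|]. apply (Hg 3%nat l Hl).
      + set (c3 := INR (length (filter (inX 2) (all_seqs n 3)))).
        assert (Hc3 : c3 <= INR (n * (n - 1))) by (apply le_INR, filt2_count).
        assert (Hc31 : 1 <= c3).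
        { unfold c3. replace 1 with (INR 1) by reflexivity. apply le_INR.
          assert (Hin : In [0;0;1]%nat (filter (inX 2) (all_seqs n 3))).
          { apply filter_In. split; [|reflexivity]. apply all_seqs_spec. split; [reflexivity|].
            intros x [<-|[<-|[<-|[]]]]; lia. }
          destruct (filter (inX 2) (all_seqs n 3)); [destruct Hin|simpl; lia]. }
        unfold bb. destruct (Nat.ltb_spec 3 2); [lia|]. fold w3.
        set (Mc := INR (n * (n - 1))) in *. simpl INR. unfold delta.
        assert (Eq : a1 * (Mc * w3) - (a1 - P) / 3 * w3 - c3 * ((2 * a1 + (1 + 1 + 1 - 2) * P) / (1 + 1 + 1) * w3)
                     = (a1 * (Mc - c3) + (c3 - 1) * (a1 - P) / 3) * w3) by field.
        assert (0 <= a1 * (Mc - c3)) by (apply Rmult_le_pos; lra).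
        assert (0 <= (c3 - 1) * (a1 - P)) by (apply Rmult_le_pos; lra).
        assert (0 <= (a1 * (Mc - c3) + (c3 - 1) * (a1 - P) / 3) * w3) by (apply Rmult_le_pos; lra).
        lra.
    - rewrite Rminus_0_r. apply ser2_bound; [exact hn|lra|].
      intros l Hl. destruct (Hg L l Hl). lra. }
  assert (Hpart : forall K, sum_f_R0 (fun L => a2 * E L + P * T L) K <=
                    a1 * sum_f_R0 (bb n) K - (if (3 <=? K)%nat then delta else 0)).
  { induction K as [|K IH].
    - simpl. specialize (Hbound 0%nat). simpl in Hbound. lra.
    - simpl sum_f_R0. specialize (Hbound (S K)).
      destruct (Nat.leb_spec 3 K); destruct (Nat.leb_spec 3 (S K)); destruct (Nat.eqb_spec (S K) 3);
        try lia; lra. }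
  assert (Hsum : forall K, sum_f_R0 (fun L => a2 * E L + P * T L) K =
                   a2 * sum_f_R0 E K + P * sum_f_R0 T K).
  { induction K as [|K IH]; simpl; [ring|]. rewrite IH. ring. }
  assert (Hcv : Un_cv (fun K => a2 * sum_f_R0 E K + P * sum_f_R0 T K) (a2 * e2 + P * t1)).
  { apply CV_plus; apply CV_mult; try apply cv_const; assumption. }
  assert (Hfin : a2 * e2 + P * t1 <= a1 - delta).
  { apply (cv_le _ _ _ Hcv). intros K HK. rewrite <- Hsum.
    eapply Rle_trans; [apply Hpart|].
    destruct (Nat.leb_spec 3 K); [|lia].
    assert (sum_f_R0 (bb n) K <= 1) by (apply bb_sum_le; exact hn).
    assert (a1 * sum_f_R0 (bb n) K <= a1 * 1) by (apply Rmult_le_compat_l; lra).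
    lra. }
  exists 2%nat. split; [lia|].
  exists (1 * a1 + 0), (e2 * a2 + (t1 * P + 0)).
  split; [|split].
  - exists 1, (fun _ => 0). split; [exact (E1_sum n hn)|]. split; [intros j Hj; lia|].
    reflexivity.
  - exists e2, (fun _ => t1). split; [exact He2|]. split.
    + intros j Hj. replace j with 1%nat by lia. exact Ht1.
    + reflexivity.
  - lra.
Qed.
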